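(* Let $\mathcal{T}$ be a single-elimination tournament with at least $2$ vertices and $u\in V(\mathcal{T})$. If there is no $x\in N^+(u)$ with $N^-(x)=\{a,u\}$ for some player $a\in P(\mathcal{T})$, then there exists a partition $\mathcal{A}$ of $P(\mathcal{T})\setminus P(u)$ such that: (i) for all $A\in\mathcal{A}$ and $a\in A$, there exists $b\in A\setminus\{a\}$ such that $b\in P(x)$ for every match $x$ with $a\in P(x)$; and (ii) $|\mathcal{A}|=\sum_{x\in M(\mathcal{T})\setminus V(\mathcal{T}_u)}\left\lfloor \frac{|N^-(x)\cap (P(\mathcal{T})\setminus P(u))|}{2}\right\rfloor$.
   Context: A single-elimination tournament is a finite directed graph $\mathcal{T}$ such that: (a) $\mathcal{T}$ has exactly one sink (vertex with no out-neighbours); (b) every non-sink vertex has exactly one out-neighbour; (c) $\mathcal{T}$ has no directed cycles; (d) $|N^-(v)|\ne 1$ for every vertex $v$, where $N^-(v)$ (resp. $N^+(v)$) denotes the set of in-neighbours (resp. out-neighbours) of $v$. The players $P(\mathcal{T})$ are the sources and the matches are $M(\mathcal{T})=V(\mathcal{T})\setminus P(\mathcal{T})$. For a vertex $u$, $P(u)$ is the set of players $a$ for which there is a directed walk from $a$ to $u$ (length $0$ allowed). For $u\in V(\mathcal{T})$, $\mathcal{T}_u$ is the digraph obtained from $\mathcal{T}$ by deleting every vertex $v$ with $P(v)\not\subseteq P(u)$. *)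

(* Defs.v *)
From mathcomp Require Import all_boot.
Set Implicit Arguments. Unset Strict Implicit. Unset Printing Implicit Defensive.

Section SET.
Variables (V : finType) (e : rel V).

Definition in_nb (v : V) : {set V} := [set w | e w v].
Definition out_nb (v : V) : {set V} := [set w | e v w].

Definition is_sink (v : V) : bool := out_nb v == set0.

Definition single_elim : Prop :=
  [/\ #|[set v | is_sink v]| = 1,
      (forall v, ~~ is_sink v -> #|out_nb v| = 1),
      (* no directed cycles (including loops) *)
      (forall x y, e x y -> ~~ connect e y x)
    & (forall v, #|in_nb v| != 1)].

Definition players : {set V} := [set v | in_nb v == set0].
Definition matches : {set V} := ~: players.

Definition Pl (u : V) : {set V} := [set a in players | connect e a u].

Definition VT (u : V) : {set V} := [set v | Pl v \subset Pl u].

End SET.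

(* Main.v *)
Require Import Defs.
From mathcomp Require Import all_boot.
Set Implicit Arguments. Unset Strict Implicit. Unset Printing Implicit Defensive.

Section Tree.
Variables (V : finType) (e : rel V).
Hypothesis hse : single_elim e.

Definition fpar v := odflt v [pick w | e v w].

Lemma acyc x y : e x y -> ~~ connect e y x.
Proof. by case: hse => _ _ H _; apply: H. Qed.

Lemma noloop v : ~~ e v v.
Proof. by apply/negP => /acyc; rewrite connect0. Qed.

Lemma fP v w : e v w -> fpar v = w.
Proof.
move=> evw; rewrite /fpar; case: pickP => [w' evw'|/(_ w)]; last by rewrite evw.
case: hse => _ H2 _ _.
have ns : ~~ is_sink e v by rewrite /is_sink; apply/set0Pn; exists w; rewrite inE.
have /eqP/cards1P[z hz] := H2 _ ns.
have : w \in out_nb e v by rewrite inE.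
have : w' \in out_nb e v by rewrite inE.
by rewrite hz !inE => /eqP -> /eqP ->.
Qed.

Lemma f_arc v : fpar v != v -> e v (fpar v).
Proof. by rewrite /fpar; case: pickP => [w ->|] //=; rewrite eqxx. Qed.

Lemma connect_iter x n : connect e x (iter n fpar x).
Proof.
elim: n => [|n IH] //=; apply: connect_trans IH _.
have [->|ne] := eqVneq (fpar (iter n fpar x)) (iter n fpar x); first exact: connect0.
exact/connect1/f_arc.
Qed.

Lemma iter_connect x y : connect e x y -> exists n, iter n fpar x = y.
Proof.
case/connectP=> p; elim: p x => [|z p IH] x /=; first by move=> _ ->; exists 0.
case/andP=> exz hp hy; have [n hn] := IH _ hp hy.
by exists n.+1; rewrite iterSr (fP exz).
Qed.

Lemma comparable a y z : connect e a y -> connect e a z ->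
  connect e y z || connect e z y.
Proof.
move=> /iter_connect[n <-] /iter_connect[m <-].
case: (leqP n m) => [le|/ltnW le].
  by rewrite -(subnK le) iterD connect_iter.
by rewrite -(subnK le) iterD connect_iter orbT.
Qed.

Lemma step x y : connect e x y -> x != y -> connect e (fpar x) y.
Proof.
move=> /iter_connect[[|n] <-]; first by rewrite /= eqxx.
by rewrite iterSr connect_iter.
Qed.

Lemma sib c1 c2 z : e c1 z -> e c2 z -> connect e c1 c2 -> c1 = c2.
Proof.
move=> e1 e2 c12; apply/eqP; apply: contraT => ne.
have := step c12 ne; rewrite (fP e1) => hz.
by have := acyc e2; rewrite hz.
Qed.

Lemma last_step x y : connect e x y -> x != y -> exists2 c, e c y & connect e x c.
Proof.
case/connectP=> p; case/lastP: p => [|p z] /=; first by move=> _ ->; rewrite eqxx.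
rewrite rcons_path last_rcons => /andP[hp hl] -> _.
by exists (last x p) => //; apply/connectP; exists p.
Qed.

Lemma player_conn a x : a \in players e -> connect e x a -> x = a.
Proof.
move=> pa cxa; apply/eqP; apply: contraT => ne.
have [c eca _] := last_step cxa ne.
by move: pa; rewrite inE => /eqP/setP/(_ c); rewrite !inE eca.
Qed.

Lemma down_to_leaf v : exists2 a, a \in players e & connect e a v.
Proof.
have [n] := ubnP #|[set z | connect e z v]|; elim: n v => // n IH v hn.
case: (boolP (v \in players e)) => [pv|]; first by exists v.
rewrite inE => /set0Pn[w]; rewrite inE => ewv.
have [|a pa caw] := IH w; last by exists a => //; apply: connect_trans caw (connect1 ewv).
apply: (@leq_trans #|[set z | connect e z v]|); last by rewrite -ltnS.
apply: proper_card; apply/properP; split.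
  by apply/subsetP=> z; rewrite !inE => czw; apply: connect_trans czw (connect1 ewv).
by exists v; rewrite !inE ?connect0 //; apply: acyc.
Qed.

Lemma up_to_sink v : exists2 r, is_sink e r & connect e v r.
Proof.
have [n] := ubnP #|[set z | connect e v z]|; elim: n v => // n IH v hn.
case: (boolP (is_sink e v)) => [sv|]; first by exists v.
rewrite /is_sink => /set0Pn[w]; rewrite inE => evw.
have [|r sr cwr] := IH w; last by exists r => //; apply: connect_trans (connect1 evw) cwr.
apply: (@leq_trans #|[set z | connect e v z]|); last by rewrite -ltnS.
apply: proper_card; apply/properP; split.
  by apply/subsetP=> z; rewrite !inE => czw; apply: connect_trans (connect1 evw) czw.
by exists v; rewrite !inE ?connect0 //; apply: acyc.
Qed.

Lemma player_arc (hV : 1 < #|V|) a : a \in players e -> e a (fpar a).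
Proof.
move=> pa; have : ~~ is_sink e a.
  apply/negP => sa.
  have [v va] : exists v, v != a.
    case: (boolP [exists v, v != a]) => [/existsP//|/existsPn hv].
    have : #|V| = 1.
      apply: (@eq_card1 _ a) => v; rewrite !inE; have := hv v; rewrite negbK => ->; done.
    by move=> h; rewrite h in hV.
  have [r sr cvr] := up_to_sink v.
  case: hse => /eqP/cards1P[s hs] _ _ _.
  have : r \in [set v | is_sink e v] by rewrite inE.
  have : a \in [set v | is_sink e v] by rewrite inE.
  rewrite hs !inE => /eqP ha /eqP hr; subst r s.
  by move: va; rewrite (player_conn pa cvr) eqxx.
rewrite /is_sink => /set0Pn[w]; rewrite inE => ew.
by rewrite (fP ew).
Qed.

Lemma indeg2 x : x \notin players e -> exists c1 c2, [/\ e c1 x, e c2 x & c1 != c2].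
Proof.
rewrite inE -card_gt0 => h; case: hse => _ _ _ /(_ x) h1.
have : 1 < #|in_nb e x| by case: #|_| h h1 => [|[|]].
by case/card_gt1P=> c1 [c2 []]; rewrite !inE => *; exists c1, c2.
Qed.

Lemma Pl_sub x y : connect e x y -> Pl e x \subset Pl e y.
Proof.
move=> cxy; apply/subsetP=> a; rewrite !inE => /andP[-> h] /=.
exact: connect_trans h cxy.
Qed.

Lemma Pl_proper c z : e c z -> Pl e c \proper Pl e z.
Proof.
move=> ecz; apply/properP; split; first exact/Pl_sub/connect1.
have [c1 [c2 [e1 e2 ne]]] : exists c1 c2, [/\ e c1 z, e c2 z & c1 != c2].
  by apply: indeg2; rewrite inE; apply/set0Pn; exists c; rewrite inE.
have [c' [ec' nc']] : exists c', e c' z /\ c' != c.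
  case: (eqVneq c1 c) => [ec|]; last by exists c1.
  by exists c2; split => //; rewrite -ec eq_sym.
have [m pm cm] := down_to_leaf c'.
exists m; first by rewrite inE pm; exact: connect_trans cm (connect1 ec').
rewrite inE pm /=; apply/negP => cmc.
case/orP: (comparable cmc cm) => h.
  by move: nc'; rewrite (sib ecz ec' h) eqxx.
by move: nc'; rewrite (sib ec' ecz h) eqxx.
Qed.


Variable u : V.
Hypothesis hV : 1 < #|V|.
Hypothesis hyp : ~ (exists x a, x \in out_nb e u /\ a \in players e /\ in_nb e x = [set a; u]).

Definition Qs := players e :\: Pl e u.
Definition Ls x := in_nb e x :&: (players e :\: Pl e u).

Lemma Claim z : z \in matches e -> ~~ (Pl e z \subset Pl e u) -> #|Ls z| < 2 ->
  exists2 c, e c z & (c \in matches e) && ~~ (Pl e c \subset Pl e u).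
Proof.
move=> mz nzu lz.
case: (boolP [exists c, [&& e c z, c \in matches e & ~~ (Pl e c \subset Pl e u)]]).
  by case/existsP=> c /and3P[h1 h2 h3]; exists c => //; rewrite h2.
move/existsPn=> hc; exfalso.
have hm c : e c z -> c \in matches e -> Pl e c \subset Pl e u.
  by move=> h1 h2; have := hc c; rewrite h1 h2 /= negbK.
have [l lPz lu] := subsetPn nzu.
move: (lPz); rewrite inE => /andP[pl clz].
have nlz : l != z by apply: contraTneq mz => <-; by rewrite inE negbK.
have [c ecz clc] := last_step clz nlz.
have pc : c \in players e.
  apply: contraT => npc.
  have mc : c \in matches e by rewrite inE.
  have := subsetP (hm c ecz mc) l; rewrite inE pl clc => /(_ isT) hlu.
  by rewrite hlu in lu.
have lc := player_conn pc clc; subst c.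
have lL : l \in Ls z by rewrite /Ls in_setI in_setD (negbTE lu) pl inE ecz.
have uniqL y : y \in Ls z -> y = l.
  by move=> yL; move/card_le1_eqP: lz => /(_ y l yL lL).
have other c : e c z -> c != l -> c = u.
  move=> ecz' ncl.
  have [m [pm cmc mu]] : exists m, [/\ m \in players e, connect e m c & m \in Pl e u].
    case: (boolP (c \in players e)) => pcc.
      exists c; split => //; rewrite inE pcc /=.
      apply: contraTT ncl => hcu; rewrite negbK; apply/eqP/uniqL.
      rewrite /Ls in_setI in_setD pcc andbT [c \in Pl e u]inE pcc /= hcu.
      by rewrite andbT inE.
    have [m pm cm] := down_to_leaf c.
    exists m; split => //; apply: (subsetP (hm c ecz' _)); first by rewrite inE.
    by rewrite inE pm.
  move: (mu); rewrite inE pm /= => cmu.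
  case/orP: (comparable cmc cmu) => [ccu|cuc].
    apply/eqP; apply: contraT => ncu.
    have := step ccu ncu; rewrite (fP ecz') => czu.
    by move: nzu; rewrite Pl_sub.
  apply/esym/eqP; apply: contraT => nuc.
  case: (boolP (c \in players e)) => pcc.
    by move: nuc; rewrite (player_conn pcc cuc) eqxx.
  have [c' ec' cuc'] := last_step cuc nuc.
  have [c1 [c2 [e1 e2 ne]]] := indeg2 pcc.
  have [c'' [ec'' nc'']] : exists c'', e c'' c /\ c'' != c'.
    case: (eqVneq c1 c') => [ec|]; last by exists c1.
    by exists c2; split => //; rewrite -ec eq_sym.
  have [m'' pm'' cm''] := down_to_leaf c''.
  have : m'' \in Pl e u.
    apply: (subsetP (hm c ecz' _)); first by rewrite inE.
    by rewrite inE pm''; apply: connect_trans cm'' (connect1 ec'').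
  rewrite inE pm'' /= => cmu''.
  have cmc' := connect_trans cmu'' cuc'.
  case/orP: (comparable cmc' cm'') => h.
    by move: nc''; rewrite (sib ec' ec'' h) eqxx.
  by move: nc''; rewrite (sib ec'' ec' h) eqxx.
have npz : z \notin players e by rewrite inE in mz.
have [c1 [c2 [e1 e2 ne]]] := indeg2 npz.
have euz : e u z.
  case: (eqVneq c1 l) => [h1|h1]; last by rewrite -(other _ e1 h1).
  have h2 : c2 != l by rewrite -h1 eq_sym.
  by rewrite -(other _ e2 h2).
apply: hyp; exists z, l; split; first by rewrite inE.
split => //; apply/setP => y; rewrite !inE; apply/idP/idP.
  move=> eyz; case: (eqVneq y l) => [//|ny] /=.
  by rewrite (other _ eyz ny) eqxx.
by case/orP => /eqP ->.
Qed.


Lemma ML z : z \in matches e -> ~~ (Pl e z \subset Pl e u) ->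
  exists2 z', connect e z' z & 1 < #|Ls z'|.
Proof.
have [n] := ubnP #|Pl e z|; elim: n z => // n IH z hn mz nzu.
case: (ltnP 1 #|Ls z|) => [h|h]; first by exists z.
have [c ecz /andP[mc ncu]] := Claim mz nzu h.
have [|z' cz' hz'] := IH c _ mc ncu.
  apply: (@leq_trans #|Pl e z|); last by rewrite -ltnS.
  exact/proper_card/Pl_proper.
by exists z' => //; apply: connect_trans cz' (connect1 ecz).
Qed.

Definition Hs := [set a in Qs | odd (index a (enum (Ls (fpar a))))].

Lemma Q_arc a : a \in Qs -> e a (fpar a).
Proof. by rewrite inE => /andP[_ pa]; apply: player_arc. Qed.

Lemma Q_L a : a \in Qs -> a \in Ls (fpar a).
Proof. by move=> aQ; rewrite /Ls in_setI aQ inE Q_arc. Qed.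

Lemma L_f x b : b \in Ls x -> fpar b = x.
Proof. by rewrite /Ls in_setI inE => /andP[/fP]. Qed.

Lemma L_Q x b : b \in Ls x -> b \in Qs.
Proof. by rewrite /Ls in_setI => /andP[]. Qed.

Lemma Q_player a : a \in Qs -> a \in players e.
Proof. by rewrite inE => /andP[]. Qed.

Lemma Q_notu a : a \in Qs -> a \notin Pl e u.
Proof. by rewrite inE => /andP[]. Qed.

Lemma Q_match a : a \in Qs -> fpar a \in matches e.
Proof.
move=> aQ; rewrite !inE; apply/set0Pn; exists a; rewrite inE; exact: Q_arc.
Qed.

Lemma Q_Pl a : a \in Qs -> a \in Pl e (fpar a).
Proof. by move=> aQ; rewrite inE Q_player //; apply/connect1/Q_arc. Qed.

Lemma Q_notVT a : a \in Qs -> fpar a \notin VT e u.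
Proof.
move=> aQ; rewrite inE; apply/subsetPn; exists a; [exact: Q_Pl | exact: Q_notu].
Qed.

Lemma lone a : a \in Qs -> #|Ls (fpar a)| < 2 ->
  exists h, [/\ h \in Hs, h \in Pl e (fpar a) & h != a].
Proof.
move=> aQ la.
have nxu : ~~ (Pl e (fpar a) \subset Pl e u).
  by apply/subsetPn; exists a; [exact: Q_Pl | exact: Q_notu].
have [c ecx /andP[mc ncu]] := Claim (Q_match aQ) nxu la.
have [z' cz' hz'] := ML mc ncu.
set s := enum (Ls z').
have ss : 1 < size s by rewrite -cardE.
set h := nth a s 1.
have hL : h \in Ls z' by rewrite -mem_enum mem_nth.
have fh := L_f hL.
have hQ := L_Q hL.
exists h; split.
- by rewrite inE hQ fh /= index_uniq ?enum_uniq.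
- rewrite inE Q_player //=; apply: connect_trans (connect1 (Q_arc hQ)) _.
  by rewrite fh; apply: connect_trans cz' (connect1 ecx).
- apply/eqP => ha; move: fh; rewrite ha => fa.
  by have := acyc ecx; rewrite fa cz'.
Qed.

Definition blk a :=
  let s := enum (Ls (fpar a)) in let i := index a s in
  if odd i then a
  else if i.+1 < size s then nth a s i.+1
  else if 1 < size s then nth a s i.-1
  else odflt a [pick h in Hs | (h \in Pl e (fpar a)) && (h != a)].

Lemma blk_H h : h \in Hs -> blk h = h.
Proof. by rewrite inE /blk => /andP[_ ->]. Qed.

Lemma blk_mate a : a \in Qs -> blk a \in Hs /\
  exists b, [/\ b \in Qs, b != a, blk b = blk a & b \in Pl e (fpar a)].
Proof.
move=> aQ.
set x := fpar a.
set s := enum (Ls x).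
have aL : a \in s by rewrite mem_enum Q_L.
set i := index a s.
have iS : i < size s by rewrite index_mem.
have us : uniq s := enum_uniq _.
have nthI j : j < size s -> index (nth a s j) s = j by move=> js; rewrite index_uniq.
have nthL j : j < size s -> nth a s j \in Ls x by move=> js; rewrite -mem_enum mem_nth.
have nthF j : j < size s -> fpar (nth a s j) = x by move=> js; apply/L_f/nthL.
have nthP j : j < size s -> nth a s j \in Pl e x.
  move=> js; rewrite inE (Q_player (L_Q (nthL _ js))) /=.
  by apply: connect1; have := Q_arc (L_Q (nthL _ js)); rewrite nthF.
have nthH j : j < size s -> odd j -> nth a s j \in Hs.
  by move=> js oj; rewrite inE (L_Q (nthL _ js)) nthF // -/s nthI.
have nthN j : j < size s -> j != i -> nth a s j != a.
  by move=> js; apply: contra => /eqP h; rewrite /i -[X in index X _]h nthI.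
have ai : nth a s i = a by rewrite nth_index.
have -> : blk a = (if odd i then a else if i.+1 < size s then nth a s i.+1
  else if 1 < size s then nth a s i.-1
  else odflt a [pick h in Hs | (h \in Pl e x) && (h != a)]) by [].
case: ifP => oi.
  have i0 : 0 < i by case: (i) oi.
  have j1 : i.-1 < size s by apply: leq_ltn_trans iS; apply: leq_pred.
  split; first by rewrite inE aQ oi.
  exists (nth a s i.-1); split.
  - exact: L_Q (nthL _ j1).
  - by apply: nthN => //; case: (i) i0 => // k _; rewrite /= neq_ltn ltnSn.
  - rewrite /blk nthF // -/s nthI // -(ltn_predK i0) /=.
    rewrite (ltn_predK i0) iS.
    have oi1 : odd i.-1 = false.
      by move: oi; rewrite -(ltn_predK i0) /= => /negbTE.
    by rewrite oi1 (set_nth_default a) // ai.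
  - exact: nthP.
case: ifP => i1.
  split; first by rewrite nthH //= oi.
  exists (nth a s i.+1); split.
  - exact: L_Q (nthL _ i1).
  - by apply: nthN => //; rewrite neq_ltn ltnSn orbT.
  - by rewrite blk_H // nthH //= oi.
  - exact: nthP.
case: ifP => s1.
  have i0 : 0 < i.
    case: (i) i1 s1 => // /=; by case: (size s) => [|[|]].
  have j1 : i.-1 < size s by apply: leq_ltn_trans iS; apply: leq_pred.
  have oi1 : odd i.-1 by move: oi; rewrite -(ltn_predK i0) /= => /negbFE.
  split; first by rewrite nthH.
  exists (nth a s i.-1); split.
  - exact: L_Q (nthL _ j1).
  - by apply: nthN => //; case: (i) i0 => // k _; rewrite /= neq_ltn ltnSn.
  - by rewrite blk_H // nthH.
  - exact: nthP.
case: pickP => [h /andP[hH /andP[hP ha]]|].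
  split => //; by exists h; split => //; [rewrite inE in hH; case/andP: hH | rewrite blk_H].
have := lone aQ; rewrite -/x cardE -/s ltnNge s1 => /(_ isT)[h [hH hP ha]].
by move/(_ h); rewrite hH hP ha.
Qed.

Lemma blk_in a : a \in Qs -> blk a \in Hs.
Proof. by case/blk_mate. Qed.


Lemma count_odd_iota n : count odd (iota 0 n) = n./2.
Proof.
suff : count odd (iota 0 n) = n./2 /\ count odd (iota 0 n.+1) = n.+1./2 by case.
elim: n => [|n [_ IH]] //; split => //.
rewrite -addn1 iotaD count_cat IH /= uphalf_half addn0.
by rewrite addn1 /=; case: (odd n) => /=; rewrite ?addn0 ?add0n ?addn1 ?add1n.
Qed.

Lemma map_index_iota (T : eqType) (s : seq T) : uniq s -> map (index^~ s) s = iota 0 (size s).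
Proof.
case: s => [//|x0 s'] us.
apply: (@eq_from_nth _ 0); rewrite size_map ?size_iota // => i hi.
by rewrite (nth_map x0) // nth_iota // index_uniq.
Qed.

Lemma card_heads x : #|[set a | (a \in Hs) && (fpar a == x)]| = (#|Ls x|)./2.
Proof.
set s := enum (Ls x).
have -> : [set a | (a \in Hs) && (fpar a == x)] = [set a in Ls x | odd (index a s)].
  apply: eq_finset => a /=; apply/idP/idP.
    case/andP=> aH /eqP fa.
    have aQ : a \in Qs by move: aH; rewrite /Hs in_set => /andP[].
    have oa : odd (index a (enum (Ls (fpar a)))) by move: aH; rewrite /Hs in_set => /andP[].
    by rewrite /s -fa Q_L //= oa.
  case/andP=> aL oa; have fa := L_f aL.
  have aH : a \in Hs by rewrite /Hs in_set (L_Q aL) fa.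
  by rewrite aH fa eqxx.
have -> : #|[set a in Ls x | odd (index a s)]| = size (filter (fun a => odd (index a s)) s).
  rewrite -(card_uniqP (filter_uniq _ (enum_uniq _))).
  by apply: eq_card => a; rewrite mem_filter mem_enum andbC; apply: in_set.
by rewrite size_filter -(count_map (index^~ s) odd) map_index_iota ?enum_uniq //
  count_odd_iota -cardE.
Qed.

Lemma main_count : #|preim_partition blk Qs| =
  \sum_(x in matches e :\: VT e u) (#|in_nb e x :&: (players e :\: Pl e u)|)./2.
Proof.
set S := fun t => [set y in Qs | t == blk y].
have -> : preim_partition blk Qs = (S \o blk) @: Qs by [].
rewrite imset_comp.
have -> : blk @: Qs = Hs.
  apply/setP => h; apply/imsetP/idP => [[a aQ ->]|hH]; first exact: blk_in.
  by exists h; [move: hH; rewrite inE => /andP[] | rewrite blk_H].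
rewrite card_in_imset; last first.
  move=> t1 t2 h1 h2 /setP/(_ t1).
  have : t1 \in Qs by move: h1; rewrite /Hs in_set => /andP[].
  rewrite /Qs !inE blk_H // eqxx => -> /=.
  by move/esym/eqP.
rewrite -sum1_card (partition_big fpar (fun x => x \in matches e :\: VT e u)); last first.
  move=> a aH; have aQ : a \in Qs by move: aH; rewrite /Hs in_set => /andP[].
  by rewrite in_setD Q_notVT //= Q_match.
apply: eq_bigr => x _; rewrite sum1dep_card card_heads.
by [].
Qed.


Lemma main : exists Ap : {set {set V}},
    [/\ partition Ap (players e :\: Pl e u),
        (forall A a, A \in Ap -> a \in A ->
           exists2 b, b \in A :\ a &
             forall x, x \in matches e -> a \in Pl e x -> b \in Pl e x)
      & #|Ap| = \sum_(x in matches e :\: VT e u)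
                  (#|in_nb e x :&: (players e :\: Pl e u)|)./2].
Proof.
exists (preim_partition blk Qs); split; first exact: preim_partitionP.
  move=> A a /imsetP[x xQ ->]; rewrite in_set => /andP[aQ /eqP hx].
  have [_ [b [bQ ba bb bP]]] := blk_mate aQ.
  exists b.
    apply/setD1P; split => //; rewrite in_set; apply/andP; split => //.
    by rewrite hx bb.
  move=> y my ay.
  have pa := Q_player aQ.
  have cay : connect e a y by move: ay; rewrite inE pa.
  have nay : a != y by apply: contraTneq my => <-; rewrite inE negbK.
  exact: (subsetP (Pl_sub (step cay nay))).
exact: main_count.
Qed.

End Tree.

Unset Implicit Arguments.
Set Strict Implicit.

Theorem lemma5p12 (V : finType) (e : rel V) (u : V) :
  single_elim e -> 1 < #|V| ->
  ~ (exists x a, x \in out_nb e u /\ a \in players e /\ in_nb e x = [set a; u]) ->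
  exists Ap : {set {set V}},
    [/\ partition Ap (players e :\: Pl e u),
        (forall A a, A \in Ap -> a \in A ->
           exists2 b, b \in A :\ a &
             forall x, x \in matches e -> a \in Pl e x -> b \in Pl e x)
      & #|Ap| = \sum_(x in matches e :\: VT e u)
                  (#|in_nb e x :&: (players e :\: Pl e u)|)./2].
Proof. move=> hse hV hyp; exact: (main hse hV hyp). Qed.
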